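(* Let $p$ be an odd prime, $n,s,m\ge2$, and $a,b,c,d,e,f\in\mathbb{Z}_p\setminus\{0\}$ such that each of the pairs $(a,b),(c,d),(e,f)$ satisfies the quadratic reciprocity law; put $k_s=k(a,b)$, $k_n=k(c,d)$, $k_m=k(e,f)$. Suppose that the reductions modulo $p$ of $g_n,g_s,g_m$ are irreducible over $\mathbb{Z}_p$. Let $\mathbb{E}$ be the splitting field of these three polynomials over $\mathbb{Z}_p$, and let $\lambda_1,\dots,\lambda_n$, $\kappa_1,\dots,\kappa_s$, $\iota_1,\dots,\iota_m$ be the roots in $\mathbb{E}$ of $g_n,g_s,g_m$ (mod $p$), respectively. Then over $\mathbb{E}$, $$ T_{RN}\sim\mathrm{diag}\big(k_n\lambda_i+k_s\kappa_j+k_m\iota_\ell\big)_{1\le i\le n,\,1\le j\le s,\,1\le \ell\le m}. $$ Moreover, if $T_{RN}$ is invertible, then $T_{RN}^{-1}\sim\mathrm{diag}\big((k_n\lambda_i+k_s\kappa_j+k_m\iota_\ell)^{-1}\big)_{i,j,\ell}$ over $\mathbb{E}$.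
   Context: For $k\ge1$ and $t_1,t_2\in\mathbb{Z}_p$, $S_k(t_1,t_2)$ is the $k\times k$ tridiagonal matrix with zeros on the main diagonal, every subdiagonal entry (positions $(i+1,i)$) equal to $t_1$, and every superdiagonal entry (positions $(i,i+1)$) equal to $t_2$. $I_r$ is the $r\times r$ identity and $\otimes$ the Kronecker product. $M_s=I_s\otimes S_n(c,d)+S_s(a,b)\otimes I_n$ and $T_{RN}=I_m\otimes M_s+S_m(f,e)\otimes I_{ns}$. For $j\ge0$, $g_j(x)=\sum_{i=0}^{\lfloor j/2\rfloor}(-1)^i\binom{j-i}{i}x^{j-2i}$. A pair $(t_1,t_2)\in\mathbb{Z}_p\times\mathbb{Z}_p$ satisfies the quadratic reciprocity law if either $t_1=t_2$, or $t_1t_2\equiv t^2\pmod p$ for some $t\in\mathbb{Z}_p$. For such a pair, $k(t_1,t_2)=t_1$ if $t_1=t_2$, and otherwise $k(t_1,t_2)=\min\{t\in\{0,\dots,p-1\}:t^2\equiv t_1t_2\pmod p\}$. $\sim$ denotes similarity of matrices over $\mathbb{E}$. *)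

(* Defs.v *)
From HB Require Import structures.
From mathcomp Require Import all_boot all_order all_algebra all_field.
Set Implicit Arguments. Unset Strict Implicit. Unset Printing Implicit Defensive.
Import Order.TTheory GRing.Theory.
Local Open Scope ring_scope.

Lemma kron_div_ltn m n (k : 'I_(m * n)) : (k %/ n < m)%N.
Proof.
case: n k => [|n] k; first by case: k => k /=; rewrite muln0.
by rewrite ltn_divLR // mulnC; exact: ltn_ord.
Qed.

Lemma kron_mod_ltn m n (k : 'I_(m * n)) : (k %% n < n)%N.
Proof.
case: n k => [|n] k; first by case: k => k /=; rewrite muln0.
by rewrite ltn_mod.
Qed.

Definition kdiv m n (k : 'I_(m * n)) : 'I_m := Ordinal (kron_div_ltn k).
Definition kmod m n (k : 'I_(m * n)) : 'I_n := Ordinal (kron_mod_ltn k).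

(* A (x) B, with (A (x) B)_{(i1,i2),(j1,j2)} = A_{i1 j1} * B_{i2 j2},
   where the pair (i1,i2) is encoded as i1 * m2 + i2. *)
Definition kron (R : nzRingType) m1 n1 m2 n2
    (A : 'M[R]_(m1, n1)) (B : 'M[R]_(m2, n2)) : 'M[R]_(m1 * m2, n1 * n2) :=
  \matrix_(i, j) (A (kdiv i) (kdiv j) * B (kmod i) (kmod j)).

Definition Smx (R : nzRingType) (k : nat) (t1 t2 : R) : 'M[R]_k :=
  \matrix_(i, j) (if (val i == (val j).+1)%N then t1
                  else if (val j == (val i).+1)%N then t2 else 0).

Definition Mmx (R : nzRingType) (n s : nat) (a b c d : R) : 'M[R]_(s * n) :=
  kron (1%:M : 'M[R]_s) (Smx n c d) + kron (Smx s a b) (1%:M : 'M[R]_n).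

Definition TRN (R : nzRingType) (n s m : nat) (a b c d e f : R)
    : 'M[R]_(m * (s * n)) :=
  kron (1%:M : 'M[R]_m) (Mmx n s a b c d)
  + kron (Smx m f e) (1%:M : 'M[R]_(s * n)).

Definition gpoly (R : nzRingType) (j : nat) : {poly R} :=
  \sum_(i < (j./2).+1) (((-1) ^+ i * ('C(j - i, i))%:R) *: 'X^(j - 2 * i)).

Definition QRlaw (p : nat) (t1 t2 : 'F_p) : Prop :=
  t1 = t2 \/ exists t : 'F_p, t1 * t2 = t ^+ 2.

(* k(t1,t2) = t1 if t1 = t2, otherwise the least t in {0,...,p-1} with
   t^2 = t1 t2 (mod p); find returns that least index in iota 0 p, which
   equals the value itself. *)
Definition kfun (p : nat) (t1 t2 : 'F_p) : 'F_p :=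
  if t1 == t2 then t1
  else (find (fun t : nat => (t%:R : 'F_p) ^+ 2 == t1 * t2) (iota 0 p))%:R.

(* Main.v *)
Require Import Defs.
From HB Require Import structures.
From mathcomp Require Import all_boot all_order all_algebra all_field.
From mathcomp Require Import ring zify.
Import GRing.Theory.
Local Open Scope ring_scope.
Set Implicit Arguments. Unset Strict Implicit. Unset Printing Implicit Defensive.


Section G.
Variable R : fieldType.

Definition gterm (j i : nat) : {poly R} :=
  ((-1) ^+ i * ('C(j - i, i))%:R) *: 'X^(j - 2 * i).

Lemma gpolyE j N : (j./2 < N)%N -> gpoly R j = \sum_(i < N) gterm j i.
Proof.
move=> hN; rewrite /gpoly (big_ord_widen N (gterm j)) //.
rewrite big_mkcond /=; apply: eq_bigr => i _.
case: ifP => // /negbT; rewrite -leqNgt => hi.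
rewrite /gterm bin_small ?mulr0 ?scale0r //.
have := odd_double_half j; rewrite -addnn; lia.
Qed.

Lemma gterm_rec j i : gterm j.+2 i.+1 = 'X * gterm j.+1 i.+1 - gterm j i.
Proof.
rewrite /gterm -!mul_polyC.
have E1 : (j.+2 - i.+1 = j.+1 - i)%N by [].
have E2 : (j.+2 - 2 * i.+1 = j - 2 * i)%N by lia.
have E3 : (j.+1 - i.+1 = j - i)%N by [].
have E4 : (j.+1 - 2 * i.+1 = j - (2 * i).+1)%N by lia.
rewrite E1 E2 E3 E4; clear E1 E2 E3 E4.
have [hij|hij] := leqP i j; last first.
  have -> : (j.+1 - i = 0)%N by lia.
  have -> : (j - i = 0)%N by lia.
  rewrite !bin0n; case: i hij => // i _ /=; rewrite !mulr0 !polyC0 !mul0r; ring.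
rewrite subSn // binS natrD.
have [h2|h2] := ltnP (2 * i) j.
  have -> : (j - 2 * i = (j - (2 * i).+1).+1)%N by lia.
  rewrite exprS !rmorphM !rmorphD rmorphXn rmorphN1 /= exprS; ring.
rewrite (@bin_small (j - i)) ?mulr0 ?polyC0 ?mul0r; last by lia.
rewrite !rmorphM !rmorphD !rmorphXn !rmorphN1 /= exprS polyC0; ring.
Qed.

Lemma gpolySS j : gpoly R j.+2 = 'X * gpoly R j.+1 - gpoly R j.
Proof.
rewrite (@gpolyE j.+2 j.+3); last by have := half_leq (leqnSn j.+1); rewrite /=; lia.
rewrite (@gpolyE j.+1 j.+3); last by have := half_leq (leqnSn j); lia.
rewrite (@gpolyE j j.+2); last by have := half_leq (leqnn j); lia.
rewrite big_ord_recl [X in _ = 'X * X - _]big_ord_recl mulrDr.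
rewrite mulr_sumr (eq_bigr (fun i : 'I_j.+2 => 'X * gterm j.+1 (bump 0 i) - gterm j i)); last first.
  by move=> i _; rewrite /bump /= add1n gterm_rec.
rewrite sumrB /gterm /= !subn0 !bin0 !mulr1 !scale1r -exprS; ring.
Qed.

Lemma gpoly0 : gpoly R 0 = 1.
Proof. by rewrite /gpoly big_ord1 /= expr0 mul1r scale1r expr0. Qed.
Lemma gpoly1 : gpoly R 1 = 'X.
Proof. by rewrite /gpoly big_ord1 /= expr0 mul1r scale1r expr1. Qed.

End G.

Section G2.
Variable R : fieldType.

Definition gP i := (forall l, (i < l)%N -> (gpoly R i)`_l = 0) /\ (gpoly R i)`_i = 1.

Lemma gpoly_coefs i : gP i.
Proof.
suff H : forall k, gP k /\ gP k.+1 by case: (H i).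
clear i.
elim=> [|i [[IH1 IH1'] [IH2 IH2']]].
  split; split.
  - by move=> [|l] // _; rewrite gpoly0 coefC.
  - by rewrite gpoly0 coefC.
  - by move=> [|[|l]] // _; rewrite gpoly1 coefX.
  - by rewrite gpoly1 coefX.
split; first by split.
split; rewrite gpolySS.
  by move=> [|l] // hl; rewrite coefB coefXM /= IH2 // IH1 ?subr0 //; lia.
by rewrite coefB coefXM /= IH2' IH1 ?subr0 //.
Qed.

Lemma size_gpoly i : (size (gpoly R i) <= i.+1)%N.
Proof. by apply/leq_sizeP => l hl; apply: (gpoly_coefs i).1. Qed.

Lemma gpoly_map (K : fieldType) (L : fieldType) (g : {rmorphism K -> L}) j :
  map_poly g (gpoly K j) = gpoly L j.
Proof.
rewrite /gpoly rmorph_sum; apply: eq_bigr => i _.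
by rewrite /= map_polyZ map_polyXn rmorphM rmorphXn rmorphN1 rmorph_nat.
Qed.
End G2.
Section S.
Variable F : fieldType.
Lemma sum_delta k (y : nat -> F) (c : nat) :
  \sum_(l < k) ((val l == c)%:R * y l) = if (c < k)%N then y c else 0.
Proof.
case: ifP => hc.
  rewrite (bigD1 (Ordinal hc)) //= eqxx mul1r big1 ?addr0 //.
  move=> l hl; case: eqP => [he|]; last by rewrite mul0r.
  by case/eqP: hl; apply: val_inj.
apply: big1 => l _; case: eqP => [he|]; last by rewrite mul0r.
by move: (ltn_ord l); rewrite he hc.
Qed.

Lemma Smx_row k (t1 t2 t r mu : F) (hr1 : r * t1 = t) (hr2 : r * t = t2)
  (hroot : (gpoly F k).[mu] = 0) (i : 'I_k) :
  \sum_(l < k) (r ^+ l * (gpoly F l).[mu]) * Smx k t1 t2 l i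
  = (t * mu) * (r ^+ i * (gpoly F i).[mu]).
Proof.
pose w l := (gpoly F l).[mu].
have -> : \sum_(l < k) (r ^+ l * (gpoly F l).[mu]) * Smx k t1 t2 l i =
   \sum_(l < k) ((val l == (val i).+1)%:R * (r ^+ l * w l * t1))
 + \sum_(l < k) ((val l == (val i).-1)%:R * (r ^+ l * w l * t2 * (0 < val i)%N%:R)).
  rewrite -big_split; apply: eq_bigr => l _ /=; rewrite mxE.
  case: eqP => [h1|h1].
    rewrite h1 /= mul1r.
    have -> : ((val i).+1 == (val i).-1) = false by apply/negbTE/eqP; lia.
    by rewrite mul0r addr0.
  rewrite mul0r add0r.
  case: eqP => [h2|h2].
    rewrite h2 /= eqxx mul1r mulr1; by [].
  rewrite mulr0; case: eqP => h3; last by rewrite mul0r.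
  case: (posnP (val i)) => hi; first by rewrite !mulr0.
  by exfalso; apply: h2; move: h3 hi => /= ->; case: (val i).
rewrite (@sum_delta k (fun l => r ^+ l * w l * t1)) (@sum_delta k (fun l => r ^+ l * w l * t2 * (0 < val i)%N%:R)).
have -> : (((val i).-1 < k)%N) = true by apply: leq_ltn_trans (leq_pred _) (ltn_ord i).
have E1 : (if ((val i).+1 < k)%N then r ^+ (val i).+1 * w (val i).+1 * t1 else 0)
   = r ^+ (val i).+1 * w (val i).+1 * t1.
  case: ifP => h; first by [].
  have -> : (val i).+1 = k by apply/eqP; rewrite eqn_leq ltn_ord leqNgt h.
  by rewrite /w hroot mulr0 mul0r.
rewrite E1; clear E1.
rewrite /w; case: i => [[|i] hi] /=.
  by rewrite mulr0 addr0 gpoly1 gpoly0 hornerX hornerC expr0 expr1 -hr1; ring.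
rewrite gpolySS hornerD hornerN (mulrC 'X) hornerMX -hr2 -hr1 !exprS; ring.
Qed.

Definition Qmx k (r : F) (lam : 'I_k -> F) : 'M[F]_k :=
  \matrix_(j, i) (r ^+ i * (gpoly F i).[lam j]).

Lemma Qmx_eig k (t1 t2 t r : F) (lam : 'I_k -> F) (hr1 : r * t1 = t) (hr2 : r * t = t2)
  (hroot : forall j, (gpoly F k).[lam j] = 0) :
  Qmx r lam *m Smx k t1 t2 = diag_mx (\row_j (t * lam j)) *m Qmx r lam.
Proof.
apply/matrixP => j i; rewrite mul_diag_mx !mxE.
rewrite -(Smx_row hr1 hr2 (hroot j)); apply: eq_bigr => l _; by rewrite mxE.
Qed.

Lemma Qmx_unit k (r : F) (lam : 'I_k -> F) : r != 0 -> injective lam ->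
  Qmx r lam \in unitmx.
Proof.
move=> hr hinj.
pose C : 'M[F]_k := \matrix_(l, i) (gpoly F i)`_l.
have -> : Qmx r lam = (Vandermonde k (\row_j lam j))^T *m C *m diag_mx (\row_i r ^+ i).
  apply/matrixP => j i; rewrite mul_mx_diag !mxE mulrC; congr (_ * _).
  rewrite (@horner_coef_wide _ k); last by apply: leq_trans (@size_gpoly F i) (ltn_ord i).
  by apply: eq_bigr => l _; rewrite !mxE mulrC.
rewrite unitmxE !det_mulmx det_tr det_Vandermonde det_diag unitfE !mulf_eq0 negb_or.
have -> : \det C = 1.
  rewrite -det_tr det_trig; last first.
    by apply/is_trig_mxP => i l hil; rewrite !mxE (@gpoly_coefs F i).1.
  by apply: big1 => i _; rewrite !mxE (@gpoly_coefs F i).2.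
rewrite oner_eq0 orbF; apply/andP; split.
  rewrite prodf_seq_neq0; apply/allP => i _; apply/implyP => _.
  rewrite prodf_seq_neq0; apply/allP => j _; apply/implyP => hij.
  rewrite !mxE subr_eq0; apply/eqP => /hinj hji.
  by move: hij; rewrite hji ltnn.
rewrite prodf_seq_neq0; apply/allP => i _; apply/implyP => _.
by rewrite mxE expf_neq0.
Qed.
End S.


Lemma kpair_ltn m n (i : 'I_m) (j : 'I_n) : (i * n + j < m * n)%N.
Proof.
have hi := ltn_ord i; have hj := ltn_ord j.
have : (i.+1 * n <= m * n)%N by rewrite leq_mul2r hi orbT.
rewrite mulSn; lia.
Qed.

Definition kpair m n (i : 'I_m) (j : 'I_n) : 'I_(m * n) := Ordinal (kpair_ltn i j).

Lemma kdiv_pair m n (i : 'I_m) (j : 'I_n) : kdiv (kpair i j) = i.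
Proof.
apply: val_inj => /=; have hj := ltn_ord j.
rewrite divnMDl ?divn_small ?addn0 //; lia.
Qed.

Lemma kmod_pair m n (i : 'I_m) (j : 'I_n) : kmod (kpair i j) = j.
Proof. by apply: val_inj => /=; rewrite modnMDl modn_small. Qed.

Lemma kpairK m n (k : 'I_(m * n)) : kpair (kdiv k) (kmod k) = k.
Proof. by apply: val_inj => /=; rewrite -divn_eq. Qed.

Lemma kord_eq m n (k l : 'I_(m * n)) : (k == l) = (kdiv k == kdiv l) && (kmod k == kmod l).
Proof.
apply/eqP/andP => [-> //|[/eqP h1 /eqP h2]].
by rewrite -(kpairK k) -(kpairK l) h1 h2.
Qed.

Section K.
Variable F : fieldType.

Lemma sum_kron m n (G : 'I_m -> 'I_n -> F) :
  \sum_(k < m * n) G (kdiv k) (kmod k) = \sum_(i < m) \sum_(j < n) G i j.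
Proof.
rewrite pair_big /=.
rewrite (reindex (fun p : 'I_m * 'I_n => kpair p.1 p.2)) /=.
  by apply: eq_bigr => [[i j]] _ /=; rewrite kdiv_pair kmod_pair.
apply: onW_bij; exists (fun k => (kdiv k, kmod k)).
  by move=> [i j]; rewrite kdiv_pair kmod_pair.
by move=> k; rewrite kpairK.
Qed.

Lemma kron_mul m1 n1 p1 m2 n2 p2 (A : 'M[F]_(m1, n1)) (B : 'M[F]_(m2, n2))
  (C : 'M[F]_(n1, p1)) (D : 'M[F]_(n2, p2)) :
  kron A B *m kron C D = kron (A *m C) (B *m D).
Proof.
apply/matrixP => i j; rewrite !mxE.
pose G u v := A (kdiv i) u * C u (kdiv j) * (B (kmod i) v * D v (kmod j)).
transitivity (\sum_(k < n1 * n2) G (kdiv k) (kmod k)).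
  by apply: eq_bigr => k _; rewrite /G !mxE; ring.
rewrite sum_kron big_distrlr /=; apply: eq_bigr => u _; apply: eq_bigr => v _.
by [].
Qed.

Lemma kron1 m n : kron (1%:M : 'M[F]_m) (1%:M : 'M[F]_n) = 1%:M.
Proof.
apply/matrixP => i j; rewrite !mxE kord_eq.
by case: eqP; case: eqP => _ _ /=; rewrite ?mulr1 ?mulr0 ?mul0r.
Qed.

Lemma kronDl m1 n1 m2 n2 (A B : 'M[F]_(m1, n1)) (C : 'M[F]_(m2, n2)) :
  kron (A + B) C = kron A C + kron B C.
Proof. by apply/matrixP => i j; rewrite !mxE mulrDl. Qed.

Lemma kronDr m1 n1 m2 n2 (A : 'M[F]_(m1, n1)) (B C : 'M[F]_(m2, n2)) :
  kron A (B + C) = kron A B + kron A C.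
Proof. by apply/matrixP => i j; rewrite !mxE mulrDr. Qed.

Lemma kron_unit m n (A : 'M[F]_m) (B : 'M[F]_n) :
  A \in unitmx -> B \in unitmx -> kron A B \in unitmx.
Proof.
move=> hA hB.
have := @mulmx1_unit _ _ (kron A B) (kron (invmx A) (invmx B)).
by rewrite kron_mul !mulmxV // kron1 => /(_ erefl) [].
Qed.

Lemma kron_sim m n (Q1 A1 : 'M[F]_m) (Q2 A2 : 'M[F]_n) d1 d2 :
  Q1 *m A1 = diag_mx d1 *m Q1 -> Q2 *m A2 = diag_mx d2 *m Q2 ->
  kron Q1 Q2 *m (kron 1%:M A2 + kron A1 1%:M)
  = diag_mx (\row_k (d1 0 (kdiv k) + d2 0 (kmod k))) *m kron Q1 Q2.
Proof.
move=> h1 h2.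
have -> : diag_mx (\row_k (d1 0 (kdiv k) + d2 0 (kmod k)))
   = kron 1%:M (diag_mx d2) + kron (diag_mx d1) 1%:M.
  apply/matrixP => i j; rewrite !mxE kord_eq.
  case: (eqVneq (kdiv i) (kdiv j)) => [e1|e1]; case: (eqVneq (kmod i) (kmod j)) => [e2|e2] /=;
    rewrite ?e1 ?e2 ?eqxx ?mulr1 ?mul1r ?mulr0 ?mul0r ?addr0 ?add0r //.
  all: try rewrite (negPf e1); try rewrite (negPf e2).
  all: rewrite ?mulr0 ?mul0r ?addr0 ?add0r ?mulr1 ?mul1r ?mulr0n ?mulr1n //.
  by rewrite addrC.
rewrite (mulmxDr (kron Q1 Q2)) mulmxDl !kron_mul h1 h2 !mulmx1 !mul1mx.
by rewrite addrC.
Qed.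

Lemma map_kron (K : fieldType) (f : {rmorphism K -> F}) m1 n1 m2 n2
  (A : 'M[K]_(m1, n1)) (B : 'M[K]_(m2, n2)) :
  map_mx f (kron A B) = kron (map_mx f A) (map_mx f B).
Proof. by apply/matrixP => i j; rewrite !mxE rmorphM. Qed.

Lemma map_Smx (K : fieldType) (f : {rmorphism K -> F}) k t1 t2 :
  map_mx f (Smx k t1 t2) = Smx k (f t1) (f t2).
Proof.
apply/matrixP => i j; rewrite !mxE.
by case: eqP => _ //; case: eqP => _ //; rewrite rmorph0.
Qed.

Lemma map_TRN (K : fieldType) (f : {rmorphism K -> F}) n s m (a b c d e g : K) :
  map_mx f (TRN n s m a b c d e g) =
  kron 1%:M (kron 1%:M (Smx n (f c) (f d)) + kron (Smx s (f a) (f b)) 1%:M)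
  + kron (Smx m (f g) (f e)) 1%:M.
Proof.
by rewrite /TRN /Mmx map_mxD !map_kron map_mxD !map_kron !map_mx1 !map_Smx.
Qed.

Lemma sim_inv n (P T : 'M[F]_n) d : P \in unitmx -> T \in unitmx ->
  P *m T = diag_mx d *m P ->
  P *m invmx T = diag_mx (\row_i (d 0 i)^-1) *m P.
Proof.
move=> hP hT h.
have hD : \det (diag_mx d) != 0.
  have e : \det (diag_mx d) * \det P = \det P * \det T by rewrite -!det_mulmx h.
  move: hP hT; rewrite !unitmxE !unitfE => hP hT.
  apply/eqP => h0; move: e; rewrite h0 mul0r => /esym/eqP; rewrite mulf_eq0.
  by rewrite (negPf hP) (negPf hT).
have hd : forall i, d 0 i != 0.
  move=> i; move: hD; rewrite det_diag (bigD1 i) //= mulf_eq0 negb_or.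
  by case/andP.
have hDD : diag_mx (\row_i (d 0 i)^-1) *m diag_mx d = 1%:M.
  apply/matrixP => i j; rewrite mul_diag_mx !mxE.
  by case: eqP => [->|_]; rewrite ?mulr1n ?mulr0n ?mulr0 // mulVf.
rewrite -[RHS]mulmx1 -(mulmxV hT) mulmxA -(mulmxA _ P T) h mulmxA hDD mul1mx.
by [].
Qed.
End K.


Lemma kfun_sq p (Hp : prime p) (t1 t2 : 'F_p) : QRlaw t1 t2 ->
  kfun t1 t2 ^+ 2 = t1 * t2.
Proof.
rewrite /kfun; case: eqP => [-> _|ne]; first by rewrite expr2.
case => [//|[t ht]].
set P := (fun t : nat => (t%:R : 'F_p) ^+ 2 == t1 * t2).
have hhas : has P (iota 0 p).
  apply/hasP; exists (val t).
    rewrite mem_iota add0n /=; have := ltn_ord t; by rewrite {2}(Fp_cast Hp).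
  by rewrite /P natr_Zp ht.
have hf := has_find P (iota 0 p); rewrite hhas size_iota in hf.
have := nth_find 0 hhas; rewrite nth_iota ?add0n //; by move/eqP.
Qed.

Lemma roots_inj p (Hp : prime p) (E : fieldExtType 'F_p) k (g : {poly 'F_p})
  (lam : 'I_k -> E) : irreducible_poly g ->
  map_poly (in_alg E) g = \prod_(i < k) ('X - (lam i)%:P) -> injective lam.
Proof.
move=> hirr hprod.
have hP : \prod_(i < k) ('X - (lam i)%:P) = \prod_(x <- map lam (enum 'I_k)) ('X - x%:P).
  by rewrite big_map big_enum.
rewrite hP in hprod.
case: k lam hprod {hP} => [|k] lam hprod; first by move=> [].
pose L := FinFieldExtType E.
pose h : {poly 'F_p} := 'X^#|L| - 'X.
have hroot : root (map_poly (in_alg E) g) (lam ord0).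
  by rewrite hprod root_prod_XsubC map_f // mem_enum.
have hmh : map_poly (in_alg E) h = 'X^#|L| - 'X.
  by rewrite rmorphB /= map_polyXn map_polyX.
have hrooth : root (map_poly (in_alg E) h) (lam ord0).
  by rewrite hmh rootE !hornerE (expf_card (lam ord0 : L)) subrr.
have hdvd : g %| h.
  have := irredp_XsubCP hirr (dvdp_gcdl g h); case=> hg.
    exfalso; have hc : coprimep g h by rewrite /coprimep (eqp_size hg) size_poly1.
    rewrite -(coprimep_map (in_alg E)) in hc.
    by move: (coprimep_root hc hroot); move: hrooth; rewrite rootE => /eqP ->; rewrite eqxx.
  by rewrite -(eqp_dvdl _ hg) dvdp_gcdr.
have hsep : separable_poly (map_poly (in_alg E) h).
  rewrite hmh.
  have := finField_genPoly L; rewrite -big_enum /= => ->.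
  by rewrite separable_prod_XsubC (enum_uniq L).
have hsepg : separable_poly (map_poly (in_alg E) g).
  by apply: dvdp_separable hsep; rewrite dvdp_map.
rewrite hprod separable_prod_XsubC in hsepg.
by apply/injectiveP.
Qed.

Lemma factor_sim (F : fieldType) k (t1 t2 t : F) (lam : 'I_k -> F) :
  t1 != 0 -> t2 != 0 -> t ^+ 2 = t1 * t2 -> injective lam ->
  (forall j, (gpoly F k).[lam j] = 0) ->
  exists2 Q : 'M[F]_k, Q \in unitmx &
    Q *m Smx k t1 t2 = diag_mx (\row_j (t * lam j)) *m Q.
Proof.
move=> h1 h2 ht hinj hroot.
have tn0 : t != 0.
  apply/eqP => t0; move: ht; rewrite t0 expr0n /= => /esym/eqP.
  by rewrite mulf_eq0 (negPf h1) (negPf h2).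
pose r := t2 / t.
have hr1 : r * t1 = t.
  have -> : r * t1 = (t1 * t2) / t by rewrite /r mulrC mulrA.
  by rewrite -ht expr2 mulfK.
have hr2 : r * t = t2 by rewrite /r divfK.
exists (Qmx r lam).
  by apply: Qmx_unit => //; rewrite /r mulf_neq0 ?invr_eq0.
exact: Qmx_eig.
Qed.

Lemma root_of (p0 : nat) (E : fieldExtType 'F_p0) k (lam : 'I_k -> E) g :
  map_poly (in_alg E) g = \prod_(i < k) ('X - (lam i)%:P) ->
  forall j, (map_poly (in_alg E) g).[lam j] = 0.
Proof.
move=> h j; rewrite h horner_prod (bigD1 j) //= hornerXsubC subrr mul0r //.
Qed.

Unset Implicit Arguments.

Theorem proposition3p6 (p : nat) (Hp : prime p) (Hodd : odd p)
  (n s m : nat) (Hn : (2 <= n)%N) (Hs : (2 <= s)%N) (Hm : (2 <= m)%N)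
  (a b c d e f : 'F_p)
  (Ha : a != 0) (Hb : b != 0) (Hc : c != 0) (Hd : d != 0)
  (He : e != 0) (Hf : f != 0)
  (Hab : QRlaw a b) (Hcd : QRlaw c d) (Hef : QRlaw e f)
  (Hirrn : irreducible_poly (gpoly 'F_p n))
  (Hirrs : irreducible_poly (gpoly 'F_p s))
  (Hirrm : irreducible_poly (gpoly 'F_p m))
  (E : fieldExtType 'F_p)
  (HE : splittingFieldFor 1%VS
          (map_poly (in_alg E) (gpoly 'F_p n * gpoly 'F_p s * gpoly 'F_p m))
          fullv)
  (lam : 'I_n -> E) (kap : 'I_s -> E) (iot : 'I_m -> E)
  (Hlam : map_poly (in_alg E) (gpoly 'F_p n) = \prod_(i < n) ('X - (lam i)%:P))
  (Hkap : map_poly (in_alg E) (gpoly 'F_p s) = \prod_(j < s) ('X - (kap j)%:P))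
  (Hiot : map_poly (in_alg E) (gpoly 'F_p m) = \prod_(l < m) ('X - (iot l)%:P)) :
  let ks := in_alg E (kfun a b) in
  let kn := in_alg E (kfun c d) in
  let km := in_alg E (kfun e f) in
  let T := map_mx (in_alg E) (TRN n s m a b c d e f) in
  let ev := fun q : 'I_(m * (s * n)) =>
    kn * lam (kmod (kmod q)) + ks * kap (kdiv (kmod q)) + km * iot (kdiv q) in
  similar_in unitmx T (diag_mx (\row_q ev q)) /\
  (TRN n s m a b c d e f \in unitmx ->
     similar_in unitmx (invmx T) (diag_mx (\row_q (ev q)^-1))).
Proof.
move=> ks kn km T ev.
have nz x : x != 0 -> in_alg E x != 0 by move=> hx; rewrite fmorph_eq0.
have sq x y : QRlaw x y -> in_alg E (kfun x y) ^+ 2 = in_alg E x * in_alg E y.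
  by move=> hxy; rewrite -rmorphXn kfun_sq // rmorphM.
have rt k (mu : 'I_k -> E) : map_poly (in_alg E) (gpoly 'F_p k) = \prod_(i < k) ('X - (mu i)%:P) ->
    forall j, (gpoly E k).[mu j] = 0.
  by move=> h j; rewrite -(gpoly_map (in_alg E)) (root_of h).
have [Qn uQn hQn] := factor_sim (nz _ Hc) (nz _ Hd) (sq _ _ Hcd)
   (roots_inj Hp Hirrn Hlam) (rt _ _ Hlam).
have [Qs uQs hQs] := factor_sim (nz _ Ha) (nz _ Hb) (sq _ _ Hab)
   (roots_inj Hp Hirrs Hkap) (rt _ _ Hkap).
have sqm : in_alg E (kfun e f) ^+ 2 = in_alg E f * in_alg E e by rewrite sq // mulrC.
have [Qm uQm hQm] := factor_sim (nz _ Hf) (nz _ He) sqm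
   (roots_inj Hp Hirrm Hiot) (rt _ _ Hiot).
have hM := kron_sim hQs hQn.
have hT := kron_sim hQm hM.
set P := kron Qm (kron Qs Qn).
have uP : P \in unitmx by rewrite /P !kron_unit.
have hev : \row_k ((\row_j (in_alg E (kfun e f) * iot j)) 0 (kdiv k) +
     (\row_k0 ((\row_j (in_alg E (kfun a b) * kap j)) 0 (kdiv k0) +
               (\row_j (in_alg E (kfun c d) * lam j)) 0 (kmod k0))) 0 (kmod k))
    = \row_q ev q.
  by apply/rowP => q; rewrite !mxE /ev /ks /kn /km; ring.
rewrite hev in hT.
have hPT : P *m T = diag_mx (\row_q ev q) *m P by rewrite /T map_TRN.
split.
  by exists P => //; apply/similarP.
move=> hTu; exists P => //; apply/similarP => //.
have hTu' : T \in unitmx by rewrite /T map_unitmx.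
rewrite (sim_inv uP hTu' hPT); congr (diag_mx _ *m _).
by apply/rowP => q; rewrite !mxE.
Qed.
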